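(* Let $m\in\mathbb{N}$, $\boldsymbol{\sigma}\in\{0,1\}^m$, and let $\beta=\frac{\beta_1}{2}+\dots+\frac{\beta_m}{2^m}$ be $m$-bit. For $m$-bit $\alpha=\frac{\alpha_1}{2}+\dots+\frac{\alpha_m}{2^m}$ set $\alpha_{m+1}=0$, and let $j_1(u)=j(u;\alpha,\beta,\boldsymbol{\sigma})$ and $j_2(u)=j(u;\alpha,\beta,\boldsymbol{\sigma}^* )$ as defined in the context. Then: (1) For $u_1,u_2\in\{0,\dots,m-1\}$ with $u_1\ne u_2$, $$\sum_{\alpha\in\mathbb{Q}^*(2^m)}(\alpha_{m-u_1}\oplus\alpha_{m+1-j_1(u_1)})(\alpha_{m-u_2}\oplus\alpha_{m+1-j_2(u_2)})=2^{m-2}.$$ (2) For $u\in\{0,\dots,m-1\}$, $$\sum_{\alpha\in\mathbb{Q}^*(2^m)}(\alpha_{m-u}\oplus\alpha_{m+1-j_1(u)})(\alpha_{m-u}\oplus\alpha_{m+1-j_2(u)})=\begin{cases}2^{m-u-1} & \text{if } u\in\{0,1\},\\ 2^{m-u-1}\left(1+\sum_{j=1}^{u-1}2^j\big((\gamma_j\oplus1)\gamma_u+\gamma_j(\gamma_u\oplus1)\big)\right) & \text{if } u\in\{2,\dots,m-1\},\end{cases}$$ where $\gamma_j:=\beta_j\oplus\sigma_j$ for $j\in\{1,\dots,m-1\}$.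
   Context: $\oplus$ denotes addition modulo 2. A real number $\alpha\in[0,1)$ is called $m$-bit if $\alpha\in\mathbb{Q}(2^m):=\{0,\frac1{2^m},\dots,\frac{2^m-1}{2^m}\}$, i.e. $\alpha=\frac{\alpha_1}{2}+\dots+\frac{\alpha_m}{2^m}$ with $\alpha_j\in\{0,1\}$; $\mathbb{Q}^*(2^m):=\mathbb{Q}(2^m)\setminus\{0\}$. For $\boldsymbol{\sigma}=(\sigma_1,\dots,\sigma_m)\in\{0,1\}^m$, $\boldsymbol{\sigma}^*=(\sigma_1\oplus1,\dots,\sigma_m\oplus1)$. For $m$-bit $\alpha,\beta$, a shift $\boldsymbol{\tau}\in\{0,1\}^m$ and $0\le u\le m-1$, define $j(u;\alpha,\beta,\boldsymbol{\tau})=0$ if $u=0$; $j(u;\alpha,\beta,\boldsymbol{\tau})=0$ if $\alpha_{m+1-j}=\beta_j\oplus\tau_j$ for all $j=1,\dots,u$; and otherwise $j(u;\alpha,\beta,\boldsymbol{\tau})=\max\{j\le u:\alpha_{m+1-j}\ne\beta_j\oplus\tau_j\}$. *)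

(* Defs.v *)
From mathcomp Require Import all_boot.
Set Implicit Arguments. Unset Strict Implicit. Unset Printing Implicit Defensive.

(* An m-bit number alpha in Q(2^m) is represented by the natural number
   k = 2^m * alpha, with k < 2^m.  Its binary digits alpha_1 ... alpha_m
   (alpha = alpha_1/2 + ... + alpha_m/2^m) are
   alpha_j = bit (m - j) of k, for 1 <= j <= m; we set alpha_j = 0 (false)
   outside 1..m (in particular alpha_{m+1} = 0, as in the paper). *)
Definition digit (m k j : nat) : bool :=
  if (1 <= j <= m) then odd (k %/ 2 ^ (m - j)) else false.

Definition tcomp (m : nat) (tau : m.-tuple bool) (j : nat) : bool :=
  nth false tau j.-1.

Definition tstar (m : nat) (tau : m.-tuple bool) : m.-tuple bool :=
  [tuple of map negb tau].

(* j(u; alpha, beta, tau): the largest j in 1..u with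
   alpha_{m+1-j} <> beta_j (+) tau_j, and 0 if there is none (or u = 0). *)
Definition jidx (m u a b : nat) (tau : m.-tuple bool) : nat :=
  \max_(1 <= j < u.+1 | digit m a (m + 1 - j) != addb (digit m b j) (tcomp tau j)) j.

(* Main.v *)
Require Import Defs.
From mathcomp Require Import all_boot zify.

Definition bt (i a : nat) : bool := odd (a %/ 2 ^ i).
Definition lowbit (k a : nat) : bool := if k is k'.+1 then bt k' a else false.
Definition J (h : nat -> bool) (u a : nat) : nat :=
  \max_(1 <= j < u.+1 | bt j.-1 a != h j) j.
Definition f (h : nat -> bool) (u a : nat) : bool := addb (bt u a) (lowbit (J h u a) a).

Lemma bt_small n a : a < 2 ^ n -> bt n a = false.
Proof. by move=> h; rewrite /bt divn_small. Qed.

Lemma bt_addhi n a : a < 2 ^ n -> bt n (a + 2 ^ n) = true.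
Proof. by move=> h; rewrite /bt divnDr // divn_small // divnn expn_gt0. Qed.

Lemma bt_addlo i n a : i < n -> bt i (a + 2 ^ n) = bt i a.
Proof.
move=> h; rewrite /bt divnDr; last by rewrite dvdn_exp2l // ltnW.
rewrite -(expnB (isT : 0 < 2) (ltnW h)) oddD oddX /=.
have -> : (n - i == 0) = false by rewrite subn_eq0; apply/negbTE; rewrite -ltnNge.
by rewrite addbF.
Qed.

Lemma lowbit_add k n a : k <= n -> lowbit k (a + 2 ^ n) = lowbit k a.
Proof. by case: k => //= k h; rewrite bt_addlo. Qed.

Lemma J_le h u a : J h u a <= u.
Proof.
rewrite /J big_nat_cond; apply/bigmax_leqP_seq => i _ /andP[/andP[_ hi] _].
by [].
Qed.

Lemma J_add h u n a : u <= n -> J h u (a + 2 ^ n) = J h u a.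
Proof.
move=> hu; rewrite /J big_nat_cond [RHS]big_nat_cond.
apply: eq_bigl => j; case hj: (1 <= j < u.+1) => //=.
rewrite bt_addlo //; move/andP: hj => [h1 h2]; lia.
Qed.

Lemma J0 h a : J h 0 a = 0.
Proof. by rewrite /J big_geq. Qed.

Lemma J_S h v a : J h v.+1 a = if bt v a != h v.+1 then v.+1 else J h v a.
Proof.
rewrite /J big_mkcond big_nat_recr //= -big_mkcond -/(J h v a) /=.
case: ifP => _; last by rewrite maxn0.
by apply/maxn_idPr; apply: leqW; apply: J_le.
Qed.

Lemma f_add h u n a : u < n -> f h u (a + 2 ^ n) = f h u a.
Proof.
move=> hu; rewrite /f (bt_addlo _ _ _ hu) (J_add _ _ _ _ (ltnW hu)) lowbit_add //.
by apply: leq_trans (J_le _ _ _) (ltnW hu).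
Qed.

Lemma f_flip h u a : a < 2 ^ u -> f h u (a + 2 ^ u) = ~~ f h u a.
Proof.
move=> ha; rewrite /f (J_add _ _ _ _ (leqnn u)) (lowbit_add _ _ _ (J_le _ _ _)) (bt_addhi _ _ ha) (bt_small _ _ ha).
by case: lowbit.
Qed.

Lemma f0 h u : f h u 0 = false.
Proof. by rewrite /f /bt div0n /=; case: (J h u 0) => //= k; rewrite /bt div0n. Qed.

Lemma split_top n (F : nat -> nat) :
  \sum_(0 <= a < 2 ^ n.+1) F a =
  \sum_(0 <= a < 2 ^ n) F a + \sum_(0 <= a < 2 ^ n) F (a + 2 ^ n).
Proof.
rewrite expnS mul2n -addnn (@big_cat_nat _ _ _ (2 ^ n)) //; last exact: leq_addr.
by rewrite -{2}(add0n (2 ^ n)) big_addn addnK.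
Qed.

Lemma sum_period n k (F : nat -> nat) :
  (forall N a, n <= N -> F (a + 2 ^ N) = F a) ->
  \sum_(0 <= a < 2 ^ (n + k)) F a = 2 ^ k * \sum_(0 <= a < 2 ^ n) F a.
Proof.
move=> HF; elim: k => [|k IH]; first by rewrite addn0 mul1n.
rewrite addnS split_top.
rewrite [X in _ + X](eq_bigr F); last by move=> a _; rewrite HF // leq_addr.
by rewrite IH expnS mul2n -addnn mulnDl.
Qed.

Lemma sum_f h u : \sum_(0 <= a < 2 ^ u.+1) f h u a = 2 ^ u.
Proof.
rewrite split_top -big_split /=.
rewrite (eq_big_nat _ _ (F2 := fun _ => 1)); last first.
  by move=> a /andP[_ ha]; rewrite f_flip //; case: f.
by rewrite sum_nat_const_nat subn0 muln1.
Qed.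

Lemma part1_gen h1 h2 u1 u2 m : u1 < u2 -> u2 < m ->
  \sum_(0 <= a < 2 ^ m) (f h1 u1 a * f h2 u2 a) = 2 ^ (m - 2).
Proof.
move=> h12 h2m.
rewrite (_ : 2 ^ m = 2 ^ (u2.+1 + (m - u2.+1))); last by rewrite subnKC.
rewrite sum_period; last first.
  move=> N a hN; rewrite f_add; last by apply: leq_trans hN; apply: ltnW.
  by rewrite f_add.
rewrite split_top -big_split /=.
rewrite (eq_big_nat _ _ (F2 := fun a => nat_of_bool (f h1 u1 a))); last first.
  move=> a /andP[_ ha]; rewrite f_flip // f_add //.
  by case: (f h1 u1 a); case: (f h2 u2 a).
rewrite (_ : 2 ^ u2 = 2 ^ (u1.+1 + (u2 - u1.+1))); last by rewrite subnKC.
rewrite sum_period; last by move=> N a hN; rewrite f_add.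
rewrite sum_f -!expnD; congr (2 ^ _); lia.
Qed.

Definition Ncnt h v c := \sum_(0 <= a < 2 ^ v) (lowbit (J h v a) a == c).

Lemma Ncnt0 h c : Ncnt h 0 c = (false == c).
Proof. by rewrite /Ncnt expn0 big_nat1 J0. Qed.

Lemma low_lo h v a : a < 2 ^ v ->
  lowbit (J h v.+1 a) a = if h v.+1 then false else lowbit (J h v a) a.
Proof.
move=> ha; rewrite J_S (bt_small _ _ ha).
by case: (h v.+1) => //=; rewrite (bt_small _ _ ha).
Qed.

Lemma low_hi h v a : a < 2 ^ v ->
  lowbit (J h v.+1 (a + 2 ^ v)) (a + 2 ^ v) = if h v.+1 then lowbit (J h v a) a else true.
Proof.
move=> ha; rewrite J_S (bt_addhi _ _ ha).
case: (h v.+1) => //=; last by rewrite (bt_addhi _ _ ha).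
by rewrite (J_add _ _ _ _ (leqnn v)) (lowbit_add _ _ _ (J_le _ _ _)).
Qed.

Lemma Ncnt_S h v c : Ncnt h v.+1 c = Ncnt h v c + 2 ^ v * (~~ h v.+1 == c).
Proof.
rewrite /Ncnt split_top.
rewrite (eq_big_nat _ _ (F2 := fun a => nat_of_bool ((if h v.+1 then false else lowbit (J h v a) a) == c))); last first.
  by move=> a /andP[_ ha]; rewrite low_lo.
rewrite [X in _ + X](eq_big_nat _ _ (F2 := fun a => nat_of_bool ((if h v.+1 then lowbit (J h v a) a else true) == c))); last first.
  by move=> a /andP[_ ha]; rewrite low_hi.
case: (h v.+1) => /=; rewrite sum_nat_const_nat subn0 mulnC //.
by rewrite addnC.
Qed.

Lemma Ncnt_closed h v c :
  Ncnt h v c = (false == c) + \sum_(1 <= j < v.+1) 2 ^ j.-1 * (~~ h j == c).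
Proof.
elim: v => [|v IH]; first by rewrite Ncnt0 big_geq // addn0.
by rewrite Ncnt_S IH [in RHS]big_nat_recr //= addnA.
Qed.

Lemma comb g v G :
  \sum_(1 <= j < v.+1) 2 ^ j.-1 * (~~ ~~ g j == ~~ G) +
  \sum_(1 <= j < v.+1) 2 ^ j.-1 * (~~ g j == G) =
  \sum_(1 <= j < v.+1) 2 ^ j * (~~ g j * G + g j * ~~ G).
Proof.
rewrite -big_split; apply: eq_big_nat => -[|j] // _ /=.
rewrite expnS negbK; case: (g j.+1); case: G => /=; lia.
Qed.

Lemma Csum g u :
  \sum_(0 <= a < 2 ^ u.+1) (f g u a * f (fun j => ~~ g j) u a) =
  1 + \sum_(1 <= j < u) 2 ^ j * (~~ g j * g u + g j * ~~ g u).
Proof.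
case: u => [|v].
  rewrite [in RHS]big_geq // addn0 expn1 big_nat_recr // big_nat1 /f !J0 /=.
  by [].
set g' := fun j => ~~ g j.
rewrite split_top -big_split /=.
rewrite (eq_big_nat _ _ (F2 := fun a => nat_of_bool (lowbit (J g v.+1 a) a == lowbit (J g' v.+1 a) a))); last first.
  move=> a /andP[_ ha]; rewrite !f_flip // /f (bt_small _ _ ha) /=.
  by case: (lowbit (J g v.+1 a) a); case: (lowbit (J g' v.+1 a) a).
rewrite split_top.
rewrite (eq_big_nat _ _ (F2 := fun a => nat_of_bool ((if g v.+1 then false else lowbit (J g v a) a) == (if g' v.+1 then false else lowbit (J g' v a) a)))); last first.
  by move=> a /andP[_ ha]; rewrite !low_lo.
rewrite [X in _ + X](eq_big_nat _ _ (F2 := fun a => nat_of_bool ((if g v.+1 then lowbit (J g v a) a else true) == (if g' v.+1 then lowbit (J g' v a) a else true)))); last first.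
  by move=> a /andP[_ ha]; rewrite !low_hi.
have <- : Ncnt g' v (~~ g v.+1) + Ncnt g v (g v.+1) = 1 + \sum_(1 <= j < v.+1) 2 ^ j * (~~ g j * g v.+1 + g j * ~~ g v.+1).
  rewrite !Ncnt_closed -(comb g v (g v.+1)) /g' /=.
  have H1 : (false == ~~ g v.+1) + (false == g v.+1) = 1 by case: (g v.+1).
  lia.
rewrite /Ncnt /g'; case: (g v.+1) => /=; last rewrite addnC;
  by congr (_ + _); apply: eq_bigr => i _; case: (lowbit _ _).
Qed.

Lemma digit_bt m a u : u < m -> digit m a (m - u) = bt u a.
Proof.
move=> hu; rewrite /digit.
have -> : (1 <= m - u <= m) = true by apply/andP; split; lia.
by rewrite subKn // ltnW.
Qed.

Lemma digit_low m a k : k <= m -> digit m a (m + 1 - k) = lowbit k a.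
Proof.
case: k => [|k] hk; rewrite /digit.
  by have -> : (1 <= m + 1 - 0 <= m) = false by apply/negbTE; lia.
have -> : (1 <= m + 1 - k.+1 <= m) = true by apply/andP; split; lia.
by have -> : m - (m + 1 - k.+1) = k by lia.
Qed.

Lemma J_ext h h' u a : (forall j, 0 < j <= u -> h j = h' j) -> J h u a = J h' u a.
Proof.
move=> H; rewrite /J big_nat_cond [RHS]big_nat_cond.
apply: eq_bigl => j; case hj: (1 <= j < u.+1) => //=.
by rewrite H.
Qed.

Lemma jidx_J m u a b (tau : m.-tuple bool) : u <= m ->
  jidx u a b tau = J (fun j => addb (digit m b j) (tcomp tau j)) u a.
Proof.
move=> hu; rewrite /jidx /J big_nat_cond [RHS]big_nat_cond.
apply: eq_bigl => j; case hj: (1 <= j < u.+1) => //=.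
move/andP: hj => [h1 h2].
rewrite digit_low; last by lia.
by case: j h1 h2.
Qed.

Lemma fform m u a b (tau : m.-tuple bool) : u < m ->
  addb (digit m a (m - u)) (digit m a (m + 1 - jidx u a b tau)) =
  f (fun j => addb (digit m b j) (tcomp tau j)) u a.
Proof.
move=> hu; rewrite jidx_J ?(ltnW hu) // digit_bt // digit_low //.
by apply: leq_trans (J_le _ _ _) (ltnW hu).
Qed.

Lemma tstarE m (sigma : m.-tuple bool) j : 0 < j <= m ->
  tcomp (tstar sigma) j = ~~ tcomp sigma j.
Proof.
move=> /andP[h1 h2]; rewrite /tcomp /tstar /=.
rewrite (nth_map false) // size_tuple; lia.
Qed.

Theorem lemma3 (m : nat) (sigma : m.-tuple bool) (b : nat) (hb : b < 2 ^ m) :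
  (forall u1 u2 : nat, u1 < m -> u2 < m -> u1 <> u2 ->
     \sum_(1 <= a < 2 ^ m)
        (addb (digit m a (m - u1)) (digit m a (m + 1 - jidx u1 a b sigma))
         * addb (digit m a (m - u2)) (digit m a (m + 1 - jidx u2 a b (tstar sigma))))
     = 2 ^ (m - 2))
  /\
  (forall u : nat, u < m ->
     \sum_(1 <= a < 2 ^ m)
        (addb (digit m a (m - u)) (digit m a (m + 1 - jidx u a b sigma))
         * addb (digit m a (m - u)) (digit m a (m + 1 - jidx u a b (tstar sigma))))
     = (if u <= 1 then 2 ^ (m - u - 1)
        else 2 ^ (m - u - 1) *
             (1 + \sum_(1 <= j < u)
                    2 ^ j * (~~ addb (digit m b j) (tcomp sigma j)
                               * addb (digit m b u) (tcomp sigma u)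
                             + addb (digit m b j) (tcomp sigma j)
                               * ~~ addb (digit m b u) (tcomp sigma u))))).
Proof.
pose g := fun j => addb (digit m b j) (tcomp sigma j).
have Hs : forall u a, u < m ->
  addb (digit m a (m - u)) (digit m a (m + 1 - jidx u a b sigma)) = f g u a.
  by move=> u a hu; rewrite fform.
have Ht : forall u a, u < m ->
  addb (digit m a (m - u)) (digit m a (m + 1 - jidx u a b (tstar sigma))) =
  f (fun j => ~~ g j) u a.
  move=> u a hu; rewrite fform // /f (J_ext _ (fun j => ~~ g j)) //.
  move=> j hj; rewrite tstarE ?addbN //.
  move/andP: hj => [h1 h2]; apply/andP; split => //; lia.
have Hpos : 0 < 2 ^ m by rewrite expn_gt0.
split.
  move=> u1 u2 h1 h2 hne.
  transitivity (\sum_(0 <= a < 2 ^ m) (f g u1 a * f (fun j => ~~ g j) u2 a)).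
    rewrite [RHS](big_ltn Hpos) f0 /= add0n.
    by apply: eq_big_nat => a _; rewrite Hs // Ht.
  case: (ltngtP u1 u2) => [h12|h21|e]; last by exfalso.
    by apply: part1_gen.
  rewrite (eq_big_nat _ _ (F2 := fun a => f (fun j => ~~ g j) u2 a * f g u1 a)); last first.
    by move=> a _; rewrite mulnC.
  by apply: part1_gen.
move=> u hu.
transitivity (\sum_(0 <= a < 2 ^ m) (f g u a * f (fun j => ~~ g j) u a)).
  rewrite [RHS](big_ltn Hpos) f0 /= add0n.
  by apply: eq_big_nat => a _; rewrite Hs // Ht.
rewrite (_ : 2 ^ m = 2 ^ (u.+1 + (m - u.+1))); last by rewrite subnKC.
rewrite sum_period; last by move=> N a hN; rewrite !f_add.
rewrite Csum (_ : m - u.+1 = m - u - 1); last by lia.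
case: ifP => hu1 //.
by rewrite big_geq // addn0 muln1.
Qed.
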